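(* Let $p$ be a prime, $r\le s$ positive integers and $k\geq0$ an integer. Then $\lambda(p^kr,p^ks,p)$ is the $p^k$-multiple of $\lambda(r,s,p)$: if $\lambda(r,s,p)=(\lambda_1,\dots,\lambda_r)$ then $\lambda(p^kr,p^ks,p)$ is the partition of length $p^kr$ in which each $p^k\lambda_i$ appears $p^k$ times for each $i$, i.e. $(p^k\lambda_1,\dots,p^k\lambda_1,\dots,p^k\lambda_r,\dots,p^k\lambda_r)$.
   Context: For a positive integer $n$, let $J_n$ denote the $n\times n$ matrix with $1$s in positions $(i,i)$ for $1\le i\le n$ and $(i,i+1)$ for $1\le i<n$, and $0$s elsewhere. For $1\le r\le s$ and a field $F$ of characteristic $p$, the Jordan canonical form of $J_r\otimes J_s$ over $F$ is $J_{\lambda_1}\oplus\cdots\oplus J_{\lambda_r}$ with $\lambda_1\ge\cdots\ge\lambda_r>0$; write $\lambda(r,s,p)=(\lambda_1,\dots,\lambda_r)$, a partition of $rs$ depending only on $r,s,p$. *)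

(* Defs.v *)
From HB Require Import structures.
From mathcomp Require Import all_boot all_order all_algebra.
From mathcomp Require Export mxtens.
Set Implicit Arguments. Unset Strict Implicit. Unset Printing Implicit Defensive.
Import GRing.Theory.
Local Open Scope ring_scope.

Definition Jmx (F : fieldType) (n : nat) : 'M[F]_n :=
  \matrix_(i < n, j < n) (((i : nat) == j) || ((j : nat) == i.+1))%:R.

Definition block_starts (lam : seq nat) : seq nat :=
  [seq sumn (take m lam) | m <- iota 0 (size lam).+1].

(* The block-diagonal matrix J_{lam_1} (+) ... (+) J_{lam_l}, written out
   entrywise: 1 on the diagonal, 1 at (i,i+1) unless i+1 starts a new block. *)
Definition jordan_mx (F : fieldType) (n : nat) (lam : seq nat) : 'M[F]_n :=
  \matrix_(i < n, j < n)
    (((i : nat) == j) || (((j : nat) == i.+1) && ((j : nat) \notin block_starts lam)))%:R.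

Definition jordan_type (F : fieldType) (n : nat) (A : 'M[F]_n) (lam : seq nat) : Prop :=
  [/\ sumn lam = n, sorted geq lam, all (fun x => 0 < x)%N lam &
      exists P : 'M[F]_n, P \in unitmx /\ P *m A *m invmx P = jordan_mx F n lam].

Definition mult_partition (q : nat) (lam : seq nat) : seq nat :=
  flatten [seq nseq q (q * x)%N | x <- lam].

(* Main.v *)
Require Import Defs.
From HB Require Import structures.
From mathcomp Require Import all_boot all_order all_algebra.
From mathcomp Require Import mxtens.
From mathcomp Require Import zify ring.
From Stdlib Require Import Lia.
Local Open Scope ring_scope.

Module M1.
Local Close Scope ring_scope.
Set Implicit Arguments. Unset Strict Implicit. Unset Printing Implicit Defensive.
Import GRing.Theory.
Local Open Scope ring_scope.

Section Sim.
Variable F : fieldType.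

Definition sim m n (A : 'M[F]_m) (B : 'M[F]_n) :=
  exists (P : 'M[F]_(m, n)) (Q : 'M[F]_(n, m)),
    [/\ P *m Q = 1%:M, Q *m P = 1%:M & A *m P = P *m B].

Lemma sim_refl n (A : 'M[F]_n) : sim A A.
Proof. by exists 1%:M, 1%:M; rewrite !mulmx1 mul1mx. Qed.

Lemma sim_sym m n (A : 'M[F]_m) (B : 'M[F]_n) : sim A B -> sim B A.
Proof.
case=> P [Q [PQ QP AP]]; exists Q, P; split => //.
by rewrite -[B *m Q]mul1mx -QP -mulmxA (mulmxA P) -AP -!mulmxA PQ mulmx1.
Qed.

Lemma sim_trans m n o (A : 'M[F]_m) (B : 'M[F]_n) (C : 'M[F]_o) :
  sim A B -> sim B C -> sim A C.
Proof.
case=> P [Q [PQ QP AP]] [P' [Q' [PQ' QP' BP']]]; exists (P *m P'), (Q' *m Q); split.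
- by rewrite mulmxA -(mulmxA P) PQ' mulmx1 PQ.
- by rewrite mulmxA -(mulmxA Q') QP mulmx1 QP'.
- by rewrite mulmxA AP -mulmxA BP' mulmxA.
Qed.

Lemma tens11 m n : (1%:M : 'M[F]_m) *t (1%:M : 'M[F]_n) = 1%:M.
Proof.
apply/matrixP=> i j; case: (mxtens_indexP i)=> i0 i1; case: (mxtens_indexP j)=> j0 j1.
by rewrite tensmxE !mxE -natrM mulnb (inj_eq (can_inj (@mxtens_indexK _ _))) xpair_eqE.
Qed.

Lemma sim_tens m n m' n' (A : 'M[F]_m) (A' : 'M[F]_m') (B : 'M[F]_n) (B' : 'M[F]_n') :
  sim A A' -> sim B B' -> sim (A *t B) (A' *t B').
Proof.
case=> P [Q [PQ QP AP]] [P' [Q' [PQ' QP' BP']]]; exists (P *t P'), (Q *t Q'); split.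
- by rewrite tensmx_mul PQ PQ' tens11.
- by rewrite tensmx_mul QP QP' tens11.
- by rewrite !tensmx_mul AP BP'.
Qed.

Lemma sim_block m n m' n' (A : 'M[F]_m) (A' : 'M[F]_m') (B : 'M[F]_n) (B' : 'M[F]_n') :
  sim A A' -> sim B B' -> sim (block_mx A 0 0 B) (block_mx A' 0 0 B').
Proof.
case=> P [Q [PQ QP AP]] [P' [Q' [PQ' QP' BP']]].
exists (block_mx P 0 0 P'), (block_mx Q 0 0 Q'); split;
 rewrite !mulmx_block !mulmx0 !mul0mx !addr0 !add0r ?PQ ?PQ' ?QP ?QP' ?AP ?BP' //;
 by rewrite -scalar_mx_block.
Qed.

Lemma sim_perm m n (A : 'M[F]_m) (B : 'M[F]_n) (s : 'I_n -> 'I_m) (t : 'I_m -> 'I_n) :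
  cancel s t -> cancel t s -> (forall k l, A (s k) (s l) = B k l) -> sim A B.
Proof.
move=> st ts AB.
exists (\matrix_(i, k) (i == s k)%:R), (\matrix_(k, i) (i == s k)%:R); split.
- apply/matrixP=> i j; rewrite !mxE (bigD1 (t i)) //= big1 ?addr0.
    by rewrite !mxE ts eqxx mul1r eq_sym.
  move=> k /negbTE kt; rewrite !mxE; case: eqP => [e|]; last by rewrite mul0r.
  by move: kt; rewrite e st eqxx.
- apply/matrixP=> i j; rewrite !mxE (bigD1 (s i)) //= big1 ?addr0.
    by rewrite !mxE eqxx mul1r (can_eq st).
  by move=> k /negbTE kt; rewrite !mxE kt mul0r.
- apply/matrixP=> i j; rewrite !mxE (bigD1 (s j)) //= big1 ?addr0.
    rewrite (bigD1 (t i)) //= big1 ?addr0.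
      by rewrite !mxE eqxx mulr1 ts eqxx mul1r -AB ts.
    by move=> k /negbTE kt; rewrite !mxE; case: eqP => [e|]; [move: kt; rewrite e st eqxx|rewrite mul0r].
  by move=> k /negbTE kt; rewrite !mxE kt mulr0.
Qed.

End Sim.

End M1.
Import M1.

Module M2.
Local Close Scope ring_scope.
Set Implicit Arguments. Unset Strict Implicit. Unset Printing Implicit Defensive.
Import GRing.Theory.

Lemma bs_cons x l : block_starts (x :: l) = 0%N :: map (addn x) (block_starts l).
Proof.
rewrite /block_starts /= -[1%N]addn0 iotaDl -!map_comp.
congr [:: _, _ & _].
rewrite -[(1+0).+1]/(2+0)%N iotaDl -map_comp; apply: eq_map => m /=.
by [].
Qed.

Lemma mem_map_add x (s : seq nat) j :
  (j \in map (addn x) s) = (x <= j)%N && (j - x \in s).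
Proof.
case: (leqP x j) => [le|lt] /=.
  by rewrite -{1}(subnKC le) mem_map //; apply: addnI.
by apply/mapP => -[y _ e]; move: lt; rewrite e ltnNge leq_addr.
Qed.

Lemma mem_bs_cons x l j :
  (j \in block_starts (x :: l)) = (j == 0%N) || ((x <= j)%N && (j - x \in block_starts l)).
Proof. by rewrite bs_cons in_cons mem_map_add. Qed.

Lemma bs0 l : 0%N \in block_starts l.
Proof. by case: l => [|x l]; rewrite ?mem_bs_cons //. Qed.

Lemma bs_sumn l : sumn l \in block_starts l.
Proof.
elim: l => [|x l IH]; first by [].
by rewrite mem_bs_cons /= leq_addr addKn IH orbT.
Qed.

Lemma bs_catl l1 l2 j : (j <= sumn l1)%N ->
  (j \in block_starts (l1 ++ l2)) = (j \in block_starts l1).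
Proof.
elim: l1 j => [|x l1 IH] j /=.
  by rewrite leqn0 => /eqP->; rewrite bs0.
move=> le; rewrite !mem_bs_cons; case: (j == 0%N) => //=.
case: (leqP x j) => //= xj; apply: IH; by rewrite leq_subLR.
Qed.

Lemma bs_catr l1 l2 j : (sumn l1 <= j)%N ->
  (j \in block_starts (l1 ++ l2)) = (j - sumn l1 \in block_starts l2).
Proof.
elim: l1 j => [|x l1 IH] j /=; first by rewrite subn0.
move=> le; rewrite !mem_bs_cons.
have xj : (x <= j)%N by apply: leq_trans le; apply: leq_addr.
rewrite xj IH; last by rewrite leq_subRL.
rewrite subnDA; case: eqP => //= j0; move: le; rewrite j0 leqn0 addn_eq0 => /andP[/eqP-> /eqP s0].
by rewrite s0 !sub0n bs0.
Qed.

Lemma ordsplit a b (k : 'I_(a + b)) :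
  (exists i, k = lshift b i) \/ (exists i, k = rshift a i).
Proof. by case: (splitP k) => j e; [left|right]; exists j; apply: val_inj. Qed.

Local Open Scope ring_scope.
Section Jor.
Variable F : fieldType.

Lemma jordan_cat l1 l2 :
  sim (block_mx (jordan_mx F (sumn l1) l1) 0 0 (jordan_mx F (sumn l2) l2))
      (jordan_mx F (sumn (l1 ++ l2)) (l1 ++ l2)).
Proof.
have e : sumn (l1 ++ l2) = (sumn l1 + sumn l2)%N by rewrite sumn_cat.
apply: sim_sym.
apply: (@sim_perm _ _ _ _ _ (cast_ord (esym e)) (cast_ord e)).
- by move=> x; apply: val_inj.
- by move=> x; apply: val_inj.
set S := sumn l1.
move=> k l; case: (ordsplit k) => -[i ->]; case: (ordsplit l) => -[j ->];
  rewrite ?block_mxEul ?block_mxEur ?block_mxEdl ?block_mxEdr !mxE /= ?mxE //.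
- rewrite bs_catl //; exact: ltnW.
- rewrite (ltn_eqF (leq_trans (ltn_ord i) (leq_addr _ _))) /=.
  case: eqP => //= ej; rewrite bs_catl; last by rewrite ej.
  have j0 : j = 0%N :> nat by move: ej (ltn_ord i); rewrite /S; lia.
  by rewrite j0 addn0 bs_sumn.
- rewrite (gtn_eqF (leq_trans (ltn_ord j) (leq_addr _ _))) /=.
  suff -> : (j == (S + i).+1 :> nat) = false by [].
  by apply/eqP; move: (ltn_ord j); rewrite /S; lia.
- by rewrite eqn_add2l -addnS eqn_add2l bs_catr ?leq_addr // addKn.
Qed.

Lemma jordan1 x : jordan_mx F (sumn [:: x]) [:: x] = Jmx F (sumn [::x]).
Proof.
apply/matrixP => i j; rewrite !mxE mem_bs_cons /=; case: (i == j :> nat) => //=.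
case: eqP => //= ej; rewrite ej /=.
have lt : (i.+1 < x)%N by rewrite -ej; have := ltn_ord j; change (j < x + 0 -> j < x)%N; rewrite addn0.
by rewrite leqNgt lt.
Qed.

End Jor.

End M2.
Import M2.

Module M3.
Local Close Scope ring_scope.
Set Implicit Arguments. Unset Strict Implicit. Unset Printing Implicit Defensive.
Import GRing.Theory.
Local Open Scope ring_scope.

Section JT.
Variable F : fieldType.

Definition is_jt n (A : 'M[F]_n) (lam : seq nat) := sim A (jordan_mx F (sumn lam) lam).

Lemma is_jt_sim m n (A : 'M[F]_m) (B : 'M[F]_n) lam : sim A B -> is_jt B lam -> is_jt A lam.
Proof. exact: sim_trans. Qed.

Lemma is_jt_cat m n (A : 'M[F]_m) (B : 'M[F]_n) l1 l2 :
  is_jt A l1 -> is_jt B l2 -> is_jt (block_mx A 0 0 B) (l1 ++ l2).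
Proof. by move=> h1 h2; apply: sim_trans (jordan_cat _ _ _); apply: sim_block. Qed.

Lemma is_jt_Jmx x : is_jt (Jmx F x) [:: x].
Proof. by rewrite /is_jt jordan1 /= addn0; apply: sim_refl. Qed.

Lemma is_jt_nil (A : 'M[F]_0) : is_jt A [::].
Proof. by rewrite /is_jt (flatmx0 A) (flatmx0 (jordan_mx _ _ _)); apply: sim_refl. Qed.

Lemma cast_tens_l a b q (e : (a * q + b * q = (a + b) * q)%N) (i : 'I_a) (c : 'I_q) :
  cast_ord e (lshift (b * q) (mxtens_index (i, c))) = mxtens_index (lshift b i, c).
Proof. by apply: val_inj. Qed.

Lemma cast_tens_r a b q (e : (a * q + b * q = (a + b) * q)%N) (i : 'I_b) (c : 'I_q) :
  cast_ord e (rshift (a * q) (mxtens_index (i, c))) = mxtens_index (rshift a i, c).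
Proof. by apply: val_inj => /=; rewrite mulnDl addnA. Qed.

Lemma tens_blockE a b q (A : 'M[F]_a) (B : 'M[F]_b) (C : 'M[F]_q) k l :
  (block_mx A 0 0 B *t C) (cast_ord (esym (mulnDl a b q)) k) (cast_ord (esym (mulnDl a b q)) l)
  = block_mx (A *t C) 0 0 (B *t C) k l.
Proof.
case: (ordsplit k) => -[i ->]; case: (mxtens_indexP i) => i0 i1;
case: (ordsplit l) => -[j ->]; case: (mxtens_indexP j) => j0 j1;
by rewrite ?cast_tens_l ?cast_tens_r !tensmxE ?block_mxEul ?block_mxEur ?block_mxEdl ?block_mxEdr ?mxE ?mul0r ?mxtens_indexK.
Qed.

Lemma sim_tens_block a b q (A : 'M[F]_a) (B : 'M[F]_b) (C : 'M[F]_q) :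
  sim (block_mx A 0 0 B *t C) (block_mx (A *t C) 0 0 (B *t C)).
Proof.
apply: (@sim_perm _ _ _ _ _ (cast_ord (esym (mulnDl a b q))) (cast_ord (mulnDl a b q))).
- by move=> x; apply: val_inj.
- by move=> x; apply: val_inj.
exact: tens_blockE.
Qed.

Lemma sim_1tens n (A : 'M[F]_n) : sim ((1%:M : 'M[F]_1) *t A) A.
Proof.
rewrite tens_scalar1mx.
apply: (@sim_perm _ _ _ _ _ (cast_ord (esym (mul1n n))) (cast_ord (mul1n n))).
- by move=> x; apply: val_inj.
- by move=> x; apply: val_inj.
by move=> k l; rewrite castmxE; congr (A _ _); apply: val_inj.
Qed.

Lemma is_jt_I q n c (C : 'M[F]_n) : is_jt C [:: c] -> is_jt ((1%:M : 'M[F]_q) *t C) (nseq q c).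
Proof.
move=> hC; elim: q => [|q IH]; first exact: is_jt_nil.
rewrite [nseq _ _]/= -cat1s.
apply: (is_jt_sim (B := block_mx ((1%:M : 'M_1) *t C) 0 0 ((1%:M : 'M_q) *t C))).
  by rewrite -[q.+1]/(1 + q)%N scalar_mx_block; apply: sim_tens_block.
by apply: is_jt_cat => //; apply: is_jt_sim hC; apply: sim_1tens.
Qed.

End JT.

End M3.
Import M3.

Module M4.
Local Close Scope ring_scope.
Set Implicit Arguments. Unset Strict Implicit. Unset Printing Implicit Defensive.
Import GRing.Theory.
Local Open Scope ring_scope.

Section K.
Variable F : fieldType.

Lemma tensmxDl m n p q (A B : 'M[F]_(m, n)) (C : 'M[F]_(p, q)) :
  (A + B) *t C = A *t C + B *t C.
Proof. by apply/matrixP => i j; rewrite !mxE mulrDl. Qed.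

Lemma tensmxDr m n p q (A : 'M[F]_(m, n)) (B C : 'M[F]_(p, q)) :
  A *t (B + C) = A *t B + A *t C.
Proof. by apply/matrixP => i j; rewrite !mxE mulrDr. Qed.

Lemma sim_tensC m n (A : 'M[F]_m) (B : 'M[F]_n) : sim (A *t B) (B *t A).
Proof.
pose s (k : 'I_(n * m)) : 'I_(m * n) :=
  mxtens_index ((mxtens_unindex k).2, (mxtens_unindex k).1).
pose t (k : 'I_(m * n)) : 'I_(n * m) :=
  mxtens_index ((mxtens_unindex k).2, (mxtens_unindex k).1).
apply: (@sim_perm _ _ _ _ _ s t).
- by move=> k; case: (mxtens_indexP k) => i j; rewrite /s /t !mxtens_indexK.
- by move=> k; case: (mxtens_indexP k) => i j; rewrite /s /t !mxtens_indexK.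
move=> k l; case: (mxtens_indexP k) => i j; case: (mxtens_indexP l) => i' j'.
by rewrite /s !mxtens_indexK /= !tensmxE mulrC.
Qed.

Variable q' : nat.
Local Notation q := q'.+1.

Definition Nq : 'M[F]_q := \matrix_(a, b) ((b : nat) == a.+1)%:R.
Definition Eq : 'M[F]_q := \matrix_(a, b) (((a : nat) == q') && ((b : nat) == 0%N))%:R.
Definition K m (A : 'M[F]_m) : 'M[F]_(m * q) := 1%:M *t Nq + A *t Eq.

Lemma sim_K m n (A : 'M[F]_m) (B : 'M[F]_n) : sim A B -> sim (K A) (K B).
Proof.
case=> P [Q [PQ QP AP]]; exists (P *t 1%:M), (Q *t 1%:M); split.
- by rewrite tensmx_mul PQ mulmx1 tens11.
- by rewrite tensmx_mul QP mulmx1 tens11.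
- by rewrite /K !mulmxDl !mulmxDr !tensmx_mul !mulmx1 !mul1mx AP.
Qed.

Lemma K_block a b (A : 'M[F]_a) (B : 'M[F]_b) :
  sim (K (block_mx A 0 0 B)) (block_mx (K A) 0 0 (K B)).
Proof.
apply: (@sim_perm _ _ _ _ _ (cast_ord (esym (mulnDl a b q))) (cast_ord (mulnDl a b q))).
- by move=> x; apply: val_inj.
- by move=> x; apply: val_inj.
move=> k l; rewrite /K mxE (scalar_mx_block a b 1) !tens_blockE.
have h (X1 X2 : 'M[F]_(a*q)) (Y1 Y2 : 'M[F]_(b*q)) : block_mx (X1 + X2) 0 0 (Y1 + Y2) = block_mx X1 0 0 Y1 + block_mx X2 0 0 Y2 :> 'M[F]_(a * q + b * q)
  by rewrite add_block_mx !addr0.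
by rewrite h [in RHS]mxE.
Qed.

Lemma K_induction (H1 : forall x, sim (K (Jmx F x)) (Jmx F (x * q))) lam :
  is_jt (K (jordan_mx F (sumn lam) lam) *t (1%:M : 'M[F]_q)) (mult_partition q lam).
Proof.
elim: lam => [|x l IH]; first exact: is_jt_nil.
have e1 := jordan_cat F [:: x] l; rewrite jordan1 in e1.
apply: (is_jt_sim (B := block_mx (K (Jmx F (sumn [:: x])) *t (1%:M : 'M[F]_q)) 0 0
                          (K (jordan_mx F (sumn l) l) *t (1%:M : 'M[F]_q)))).
  apply: sim_trans (sim_tens_block _ _ _).
  apply: sim_tens; last exact: sim_refl.
  apply: sim_trans (K_block _ _).
  by apply: sim_K; apply: sim_sym.
apply: is_jt_cat => //.
apply: (is_jt_sim (B := (1%:M : 'M[F]_q) *t Jmx F (sumn [:: x] * q))).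
  apply: sim_trans (sim_tensC _ _); apply: sim_tens; [exact: H1 | exact: sim_refl].

apply: is_jt_I.
by rewrite /= addn0 mulnC; apply: is_jt_Jmx.
Qed.

End K.

End M4.
Import M4.

Module M5.
Local Close Scope ring_scope.
Set Implicit Arguments. Unset Strict Implicit. Unset Printing Implicit Defensive.
Import GRing.Theory.
Local Open Scope ring_scope.

Lemma binq (F : fieldType) p k c : prime p -> p \in [pchar F] ->
  (0 < c < p ^ k)%N -> ('C(p ^ k, c))%:R = 0 :> F.
Proof.
move=> pp pF /andP[c0 cq].
have nat_q : [pchar {poly F}].-nat (p ^ k)%N.
  rewrite (eq_pnat _ (pchar_poly F)) (eq_pnat _ (pcharf_eq pF)).
  by rewrite pnatX pnat_id.
have H := exprDn_pchar ('X : {poly F}) 1 nat_q.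
have := congr1 (fun P : {poly F} => P`_c) H.
rewrite exprD1n expr1n coefD coefXn coef1 (gtn_eqF c0) (ltn_eqF cq) addr0.
rewrite coef_sum (bigD1 (Ordinal (leq_trans cq (leqnSn _)))) //= big1.
  by rewrite coefMn coefXn eqxx addr0 mulr1n.
move=> i ne; rewrite coefMn coefXn; case: eqP => ci; last by rewrite mul0rn.
by case/eqP: ne; apply: val_inj.
Qed.

Section Step1.
Variable F : fieldType.
Variable q' : nat.
Local Notation q := q'.+1.
Hypothesis hq : forall c, (0 < c < q)%N -> ('C(q, c))%:R = 0 :> F.

Definition NN n : 'M[F]_n := \matrix_(a, b) ((b : nat) == a.+1)%:R.
Definition Bin : 'M[F]_q := \matrix_(a, c) ('C(a, c))%:R.

Lemma sum_delta n (G : 'I_n -> F) (j : 'I_n) :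
  \sum_(b < n) ((b : nat) == j)%:R * G b = G j.
Proof.
rewrite (bigD1 j) //= eqxx mul1r big1 ?addr0 // => b ne.
by rewrite (_ : (_ == _) = false) ?mul0r //; apply/negbTE; move: ne; apply: contra => /eqP e; apply/eqP/val_inj.
Qed.

Lemma sum_delta0 n (G : 'I_n -> F) (j : nat) : (n <= j)%N ->
  \sum_(b < n) ((b : nat) == j)%:R * G b = 0.
Proof.
move=> le; rewrite big1 // => b _; rewrite (_ : (_ == _) = false) ?mul0r //.
by apply/negbTE; rewrite neq_ltn (leq_trans (ltn_ord b) le).
Qed.

Lemma Jmx_split n : Jmx F n = 1%:M + NN n.
Proof.
apply/matrixP => i j; rewrite !mxE; case: (eqVneq i j) => [->|ne].
  by rewrite eqxx /= (_ : (_ == _) = false) ?addr0 //; apply/negbTE; rewrite neq_ltn ltnSn.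
by rewrite add0r (_ : ((i : nat) == j) = false) //; apply/negbTE; move: ne; apply: contra => /eqP e; apply/eqP/val_inj.
Qed.

Lemma mulNq (X : 'M[F]_q) a c :
  (Nq F q' *m X) a c = if (a < q')%N then X (inord a.+1) c else 0.
Proof.
rewrite mxE; under eq_bigr do rewrite mxE.
case: ifP => lt.
  rewrite -(sum_delta (fun b => X b c) (inord a.+1)) inordK //.
rewrite sum_delta0 //; move: (ltn_ord a); rewrite ltnS leq_eqVlt lt orbF => /eqP ->.
by [].
Qed.

Lemma mulEq (X : 'M[F]_q) a c :
  (Eq F q' *m X) a c = if (a == q' :> nat) then X ord0 c else 0.
Proof.
rewrite mxE; under eq_bigr do rewrite mxE.
case: ifP => e.
  by rewrite -(sum_delta (fun b => X b c) ord0); apply: eq_bigr => b _.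
by rewrite big1 // => b _; rewrite mul0r.
Qed.

Lemma mulXNq (X : 'M[F]_q) a c :
  (X *m Nq F q') a c = if (0 < c)%N then X a (inord c.-1) else 0.
Proof.
rewrite mxE; under eq_bigr do rewrite mxE.
case: c => [[|c] lt] /=.
  by rewrite big1 // => b _; rewrite mulr0.
rewrite -(sum_delta (fun b => X a b) (inord c)); apply: eq_bigr => b _.
by rewrite mulrC inordK ?eqSS 1?eq_sym // ltnW.
Qed.

Lemma mulXEq (X : 'M[F]_q) a c :
  (X *m Eq F q') a c = if (c == 0 :> nat) then X a ord_max else 0.
Proof.
rewrite mxE; under eq_bigr do rewrite mxE.
case: ifP => e.
  rewrite -(sum_delta (fun b => X a b) ord_max); apply: eq_bigr => b _; by rewrite andbT mulrC.
by rewrite big1 // => b _; rewrite andbF mulr0.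
Qed.

Lemma addmxE' m n (A B : 'M[F]_(m, n)) i j : (A + B) i j = A i j + B i j.
Proof. by rewrite mxE. Qed.

Lemma ZBin : (Nq F q' + Eq F q') *m Bin = Bin *m Jmx F q.
Proof.
rewrite Jmx_split mulmxDl mulmxDr mulmx1; apply/matrixP => a c.
rewrite !addmxE' mulNq mulEq mulXNq !mxE.
case: (ltngtP a q') => [lt|gt|eq].
- rewrite addr0 inordK //; case: c => [[|c] hc] /=; first by rewrite !bin0 addr0.
  by rewrite inordK ?binS ?natrD // ltnW.
- by move: (ltn_ord a); rewrite ltnS leqNgt gt.
- rewrite add0r; case: c => [[|c] hc] /=; first by rewrite !bin0 addr0.
  rewrite inordK ?bin0n /=; last exact: ltnW.
  by rewrite eq -natrD -binS hq.
Qed.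

Lemma EBin : Eq F q' *m Bin = Bin *m Eq F q'.
Proof.
apply/matrixP => a c; rewrite mulEq mulXEq !mxE.
case: (eqVneq (c : nat) 0%N) => [->|ne]; case: (eqVneq (a : nat) q') => [ea|na] //=.
- by rewrite ea !binn.
- rewrite bin_small //; move: (ltn_ord a); rewrite ltnS leq_eqVlt (negbTE na) //.
- by rewrite bin0n (negbTE ne).
Qed.

Lemma Bin_unit : Bin \in unitmx.
Proof.
rewrite unitmxE det_trig.
  by rewrite big1 ?unitr1 // => i _; rewrite mxE binn.
by apply/forallP => i; apply/forallP => j; apply/implyP => lt; rewrite mxE bin_small.
Qed.

Lemma Jmx_tens n : Jmx F (n * q) = 1%:M *t Jmx F q + NN n *t Eq F q'.
Proof.
apply/matrixP => k l; case: (mxtens_indexP k) => i a; case: (mxtens_indexP l) => j b.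
rewrite addmxE' !tensmxE !mxE /=.
have key1 : ((i * q + a)%N == (j * q + b)%N) = ((i : nat) == j) && ((a : nat) == b).
  by rewrite eq_addl_mul // xpair_eqE.
have key2 : ((j * q + b)%N == (i * q + a).+1) =
   if (a < q')%N then ((j : nat) == i) && ((b : nat) == a.+1)
   else ((j : nat) == i.+1) && ((b : nat) == 0%N).
  case: ifP => lt.
    by rewrite -addnS eq_addl_mul // xpair_eqE.
  have ea : (a : nat) = q' by move: (ltn_ord a) lt; rewrite ltnS leq_eqVlt => /orP[/eqP|->].
  by rewrite ea -addnS -mulSnr -[(i.+1 * q)%N]addn0 eq_addl_mul // xpair_eqE.
rewrite key1 key2 -(inj_eq val_inj) /=.
move: (ltn_ord a) (ltn_ord b); set i' := nat_of_ord i; set j' := nat_of_ord j;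
  set a' := nat_of_ord a; set b' := nat_of_ord b => ha hb.
case: (ltnP a' q') => la;
case: (i' =P j') => ?; case: (a' =P b') => ?; case: (b' =P a'.+1) => ?;
case: (j' =P i') => ?; case: (j' =P i'.+1) => ?; case: (b' =P 0%N) => ?;
case: (a' =P q') => ? /=; rewrite ?(mul1r, mul0r, addr0, add0r) //; exfalso; lia.
Qed.

Lemma step1 n : sim (K q' (Jmx F n)) (Jmx F (n * q)).
Proof.
exists (1%:M *t Bin), (1%:M *t invmx Bin); split.
- by rewrite tensmx_mul mulmx1 mulmxV ?Bin_unit // tens11.
- by rewrite tensmx_mul mulmx1 mulVmx ?Bin_unit // tens11.
rewrite /K Jmx_split Jmx_tens tensmxDl !mulmxDl !mulmxDr !tensmx_mul !mul1mx !mulmx1 -ZBin.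
by rewrite mulmxDl EBin tensmxDr addrA.
Qed.

End Step1.

End M5.
Import M5.

Module M6.
Local Close Scope ring_scope.
Set Implicit Arguments. Unset Strict Implicit. Unset Printing Implicit Defensive.
Import GRing.Theory.
Local Open Scope ring_scope.

Lemma inord_valE n (x : nat) : ((inord x : 'I_n.+1) : nat) = if (x < n.+1)%N then x else 0%N.
Proof. by rewrite /inord val_insubd. Qed.

Lemma idx_eqE m n (i i' : 'I_m) (j j' : 'I_n) :
  (mxtens_index (i, j) == mxtens_index (i', j')) = ((i : nat) == i') && ((j : nat) == j').
Proof. by rewrite (inj_eq (can_inj (@mxtens_indexK _ _))) xpair_eqE. Qed.

Lemma addmxE2 (F : fieldType) m n (A B : 'M[F]_(m, n)) i j : (A + B) i j = A i j + B i j.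
Proof. by rewrite mxE. Qed.

Ltac ent :=
  let k := fresh "k" in let l := fresh "l" in
  let i := fresh "i" in let d := fresh "d" in let a := fresh "a" in let b := fresh "b" in
  apply/matrixP => k l; case: (mxtens_indexP k) => i d; case: (mxtens_indexP l) => a b;
  have := ltn_ord i; have := ltn_ord d; have := ltn_ord a; have := ltn_ord b;
  move=> ? ? ? ?.

Ltac norm_hyps :=
  repeat match goal with
  | H : @eq (ordinal _) _ _ |- _ => move/(congr1 val): H => /= H
  | H : ~ (@eq (ordinal _) ?x ?y) |- _ =>
      have {H}H : (x : nat) <> y by move=> e; apply: H; apply: val_inj
  end.

Ltac prune := try (exfalso; norm_hyps; lia).

Ltac bash :=
  repeat (match goal with
  | |- context [ if ?b then _ else _ ] => let h := fresh "h" in case: ifP => h; [| move/negbT: h => h]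
  | |- context [ @eq_op _ ?x ?y ] => let h := fresh "h" in case: (x =P y) => h
  | |- context [ (?x <= ?y)%N ] => let h := fresh "h" in case: (leqP x y) => h
  end; prune);
  rewrite /= ?(mulr1n, mulr0n, mul1r, mul0r, mulr1, mulr0, addr0, add0r) //.

Section PM.
Variable F : fieldType.

Definition PM m n (c : pred 'I_m) (f : 'I_m -> 'I_n) : 'M[F]_(m, n) :=
  \matrix_(i, j) (c i && (j == f i))%:R.

Lemma mulPM_l m n p (c : pred 'I_m) (f : 'I_m -> 'I_n) (X : 'M[F]_(n, p)) i j :
  (PM c f *m X) i j = if c i then X (f i) j else 0.
Proof.
rewrite mxE; case: ifP => ci.
  rewrite (bigD1 (f i)) //= !mxE ci eqxx mul1r big1 ?addr0 // => k /negbTE ne.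
  by rewrite mxE ne andbF mul0r.
by rewrite big1 // => k _; rewrite mxE ci mul0r.
Qed.

End PM.

Section Step2.
Variable F : fieldType.
Variable q' : nat.
Local Notation q := q'.+1.
Local Notation u k := (mxtens_unindex k).
Local Notation idx := mxtens_index.

Definition P0 : 'M[F]_(q * q) := @PM F _ _ (fun k : 'I_(q * q) => ((u k).1 + (u k).2 < q)%N)
  (fun k => idx (inord ((u k).1 + (u k).2), (u k).1)).
Definition P1 : 'M[F]_(q * q) := @PM F _ _ (fun k : 'I_(q * q) => (q <= (u k).1 + (u k).2)%N)
  (fun k => idx (inord ((u k).1 + (u k).2 - q), (u k).1)).
Definition Q0 : 'M[F]_(q * q) := @PM F _ _ (fun k : 'I_(q * q) => ((u k).2 <= (u k).1)%N)
  (fun k => idx ((u k).2, inord ((u k).1 - (u k).2))).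
Definition Q1 : 'M[F]_(q * q) := @PM F _ _ (fun k : 'I_(q * q) => ((u k).1 < (u k).2)%N)
  (fun k => idx ((u k).2, inord ((u k).1 + q - (u k).2))).
Definition XX : 'M[F]_(q * q) := @PM F _ _ (fun k : 'I_(q * q) => ((u k).1 < q')%N)
  (fun k => idx (inord ((u k).1).+1, (u k).2)).
Definition YY : 'M[F]_(q * q) := @PM F _ _ (fun k : 'I_(q * q) => ((u k).1 == q' :> nat))
  (fun k => idx (ord0, (u k).2)).

Lemma XXE : Nq F q' *t 1%:M = XX.
Proof.
ent.
rewrite !mxE. cbv beta. rewrite !mxtens_indexK ?idx_eqE /= ?inord_valE.
bash.
Qed.
Lemma YYE : Eq F q' *t 1%:M = YY.
Proof.
ent. rewrite !mxE. cbv beta. rewrite !mxtens_indexK ?idx_eqE /= ?inord_valE.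
bash.
Qed.

Ltac solve_id := rewrite /P0 /P1 /Q0 /Q1 /XX /YY; ent;
  rewrite ?addmxE2 ?mulPM_l !mxE; cbv beta;
  rewrite ?mxtens_indexK ?idx_eqE /= ?inord_valE; bash.

Local Notation N := (Nq F q').
Local Notation E := (Eq F q').

Lemma id1 : XX *m P0 = P0 *m (N *t N).
Proof. solve_id. Qed.
Lemma id2 : P0 *m (N *t E) = 0.
Proof. solve_id. Qed.
Lemma id3 : XX *m P1 = P0 *m (E *t N) + P1 *m (N *t N).
Proof. solve_id. Qed.
Lemma id4 : YY *m P0 = P0 *m (E *t E) + P1 *m (N *t E).
Proof. solve_id. Qed.
Lemma id5 : P1 *m (E *t N) = 0.
Proof. solve_id. Qed.
Lemma id6 : YY *m P1 = 0.
Proof. solve_id. Qed.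
Lemma id7 : P1 *m (E *t E) = 0.
Proof. solve_id. Qed.
Lemma inv1 : P0 *m Q0 + P1 *m Q1 = 1%:M.
Proof. solve_id. Qed.
Lemma inv2 : P0 *m Q1 = 0.
Proof. solve_id. Qed.
Lemma inv3 : P1 *m Q0 = 0.
Proof. solve_id. Qed.
Lemma inv4 : Q0 *m P0 + Q1 *m P1 = 1%:M.
Proof. solve_id. Qed.
Lemma inv5 : Q0 *m P1 = 0.
Proof. solve_id. Qed.
Lemma inv6 : Q1 *m P0 = 0.
Proof. solve_id. Qed.

End Step2.

End M6.
Import M6.

Module M7.
Local Close Scope ring_scope.
Set Implicit Arguments. Unset Strict Implicit. Unset Printing Implicit Defensive.
Import GRing.Theory.
Local Open Scope ring_scope.

Section Step2b.
Variable F : fieldType.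
Variable q' : nat.
Local Notation q := q'.+1.
Local Notation N := (Nq F q').
Local Notation E := (Eq F q').
Variables (m n : nat) (A : 'M[F]_m) (B : 'M[F]_n).
Hypotheses (uA : A \in unitmx) (uB : B \in unitmx).

Let Ap := A *t (1%:M : 'M[F]_n).
Let Api := invmx A *t (1%:M : 'M[F]_n).
Let Bp := (1%:M : 'M[F]_m) *t B.
Let C := A *t B.

Definition MM : 'M[F]_(m * n * (q * q)) :=
  1%:M *t (N *t N) + Bp *t (N *t E) + Ap *t (E *t N) + C *t (E *t E).
Definition TT : 'M[F]_(m * n * (q * q)) := 1%:M *t XX F q' + C *t YY F q'.

Lemma TM : sim TT MM.
Proof.
exists (1%:M *t P0 F q' + Ap *t P1 F q'), (1%:M *t Q0 F q' + Api *t Q1 F q'); split.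
- rewrite !mulmxDl !mulmxDr !tensmx_mul !mul1mx !mulmx1 inv2 inv3 !tensmx0 addr0 add0r.
  by rewrite mulmxV // tens11 -tensmxDr inv1 tens11.
- rewrite !mulmxDl !mulmxDr !tensmx_mul !mul1mx !mulmx1 inv5 inv6 !tensmx0 addr0 add0r.
  by rewrite mulVmx // tens11 -tensmxDr inv4 tens11.
rewrite /TT /MM !mulmxDl !mulmxDr !tensmx_mul !mul1mx !mulmx1.
rewrite id1 id3 id4 id6 id2 id5 id7 !tensmx0 !tensmxDr.
by rewrite !addr0 !addrA; congr (_ + _); rewrite addrAC.
Qed.

Lemma one_idx (i i' : 'I_m) (j j' : 'I_n) :
  (1%:M : 'M[F]_(m * n)) (mxtens_index (i, j)) (mxtens_index (i', j')) =
  (1%:M : 'M[F]_m) i i' * (1%:M : 'M[F]_n) j j'.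
Proof. by rewrite -tens11 tensmxE. Qed.

End Step2b.

Definition swap4 m1 m2 m3 m4 (k : 'I_(m1 * m2 * (m3 * m4))) : 'I_(m1 * m3 * (m2 * m4)) :=
  let z := (mxtens_unindex k).1 in let e := (mxtens_unindex k).2 in
  mxtens_index (mxtens_index ((mxtens_unindex z).1, (mxtens_unindex e).1),
                mxtens_index ((mxtens_unindex z).2, (mxtens_unindex e).2)).

Lemma swap4E m1 m2 m3 m4 i1 i2 i3 i4 :
  @swap4 m1 m2 m3 m4 (mxtens_index (mxtens_index (i1, i2), mxtens_index (i3, i4))) =
  mxtens_index (mxtens_index (i1, i3), mxtens_index (i2, i4)).
Proof. by rewrite /swap4 !mxtens_indexK. Qed.

Lemma swap4K m1 m2 m3 m4 : cancel (@swap4 m1 m2 m3 m4) (@swap4 m1 m3 m2 m4).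
Proof.
move=> k; case: (mxtens_indexP k) => z e; case: (mxtens_indexP z) => i1 i2;
case: (mxtens_indexP e) => i3 i4; by rewrite !swap4E.
Qed.

Definition assoc3 m1 m2 m3 (k : 'I_(m1 * (m2 * m3))) : 'I_(m1 * m2 * m3) :=
  mxtens_index (mxtens_index ((mxtens_unindex k).1, (mxtens_unindex (mxtens_unindex k).2).1),
                (mxtens_unindex (mxtens_unindex k).2).2).
Definition assoc3' m1 m2 m3 (k : 'I_(m1 * m2 * m3)) : 'I_(m1 * (m2 * m3)) :=
  mxtens_index ((mxtens_unindex (mxtens_unindex k).1).1,
                mxtens_index ((mxtens_unindex (mxtens_unindex k).1).2, (mxtens_unindex k).2)).

Lemma assoc3E m1 m2 m3 i1 i2 i3 :
  @assoc3 m1 m2 m3 (mxtens_index (i1, mxtens_index (i2, i3))) =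
  mxtens_index (mxtens_index (i1, i2), i3).
Proof. by rewrite /assoc3 !mxtens_indexK. Qed.

Lemma assoc3K m1 m2 m3 : cancel (@assoc3 m1 m2 m3) (@assoc3' m1 m2 m3).
Proof.
move=> k; case: (mxtens_indexP k) => i1 e; case: (mxtens_indexP e) => i2 i3.
by rewrite assoc3E /assoc3' !mxtens_indexK.
Qed.

Lemma assoc3K' m1 m2 m3 : cancel (@assoc3' m1 m2 m3) (@assoc3 m1 m2 m3).
Proof.
move=> k; case: (mxtens_indexP k) => z i3; case: (mxtens_indexP z) => i1 i2.
by rewrite /assoc3' !mxtens_indexK assoc3E.
Qed.

Section Step2c.
Variable F : fieldType.
Variable q' : nat.
Local Notation q := q'.+1.
Local Notation N := (Nq F q').
Local Notation E := (Eq F q').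

Lemma shuffle m n (A : 'M[F]_m) (B : 'M[F]_n) : sim (K q' A *t K q' B) (MM q' A B).
Proof.
apply: (@sim_perm _ _ _ _ _ (@swap4 m n q q) (@swap4 m q n q)); try exact: swap4K.
move=> k l; case: (mxtens_indexP k) => z e; case: (mxtens_indexP z) => v w;
case: (mxtens_indexP e) => a b.
case: (mxtens_indexP l) => z' e'; case: (mxtens_indexP z') => v' w';
case: (mxtens_indexP e') => a' b'.
rewrite !swap4E tensmxE /K /MM !addmxE2 !tensmxE one_idx.
ring.
Qed.

Lemma assocT m n (A : 'M[F]_m) (B : 'M[F]_n) :
  sim (K q' (A *t B) *t (1%:M : 'M[F]_q)) (TT q' A B).
Proof.
apply: (@sim_perm _ _ _ _ _ (@assoc3 (m * n) q q) (@assoc3' (m * n) q q));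
  [exact: assoc3K | exact: assoc3K' |].
move=> k l; case: (mxtens_indexP k) => z e; case: (mxtens_indexP e) => i d.
case: (mxtens_indexP l) => z' e'; case: (mxtens_indexP e') => i' d'.
rewrite !assoc3E tensmxE /K /TT -XXE -YYE !addmxE2 !tensmxE.
ring.
Qed.

End Step2c.

End M7.
Import M7.

Module M8.
Local Close Scope ring_scope.
Set Implicit Arguments. Unset Strict Implicit. Unset Printing Implicit Defensive.
Import GRing.Theory.

Lemma geq_trans' : transitive geq.
Proof. by move=> y x z h1 h2; apply: leq_trans h2 h1. Qed.

Lemma sumn_mult q lam : sumn (mult_partition q lam) = (q * q * sumn lam)%N.
Proof.
elim: lam => [|x l IH] /=; first by rewrite muln0.
rewrite /mult_partition /= sumn_cat sumn_nseq -/(mult_partition q l) IH; lia.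
Qed.

Lemma mem_mult q lam y : y \in mult_partition q lam -> exists2 x, x \in lam & y = (q * x)%N.
Proof.
elim: lam => [|x l IH] //=; rewrite /mult_partition /= mem_cat => /orP[|].
  by move/nseqP => [-> _]; exists x => //; rewrite inE eqxx.
by move/IH => [z zl ->]; exists z => //; rewrite inE zl orbT.
Qed.

Lemma sorted_nseq_cat y n s : sorted geq s -> all (geq y) s -> sorted geq (nseq n y ++ s).
Proof.
move=> hm hall; elim: n => [|n IHn] //=.
rewrite (path_sortedE geq_trans') IHn andbT all_cat hall andbT.
by apply/allP => z /nseqP [-> _]; rewrite /= leqnn.
Qed.

Lemma sorted_mult q lam : sorted geq lam -> sorted geq (mult_partition q lam).
Proof.
elim: lam => [|x l IH] //= hs.
have hl : sorted geq l by case: l hs {IH} => //= y l /andP[].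
have ha : all (geq x) l by move: hs; rewrite (path_sortedE geq_trans') => /andP[].
rewrite /mult_partition /= -/(mult_partition q l).
have hm := IH hl.
have hall : all (geq (q * x)) (mult_partition q l).
  apply/allP => y /mem_mult [z zl ->]; rewrite /= leq_mul2l; apply/orP; right.
  by move/allP: ha => /(_ z zl).
exact: sorted_nseq_cat.
Qed.

Lemma pos_mult q lam : (0 < q)%N -> all (fun x => 0 < x)%N lam ->
  all (fun x => 0 < x)%N (mult_partition q lam).
Proof.
move=> q0 /allP h; apply/allP => y /mem_mult [z zl ->]; rewrite muln_gt0 q0.
exact: h.
Qed.

Local Open Scope ring_scope.

Lemma sim_unit (F : fieldType) n (A B : 'M[F]_n) : sim A B ->
  exists P : 'M[F]_n, P \in unitmx /\ P *m A *m invmx P = B.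
Proof.
case=> P [Q [PQ QP AP]]; exists Q; have [uQ _] := mulmx1_unit QP; split => //.
have -> : invmx Q = P by rewrite -[invmx Q]mulmx1 -QP mulmxA mulVmx // mul1mx.
by rewrite -mulmxA AP mulmxA QP mul1mx.
Qed.

Lemma Jmx_unit (F : fieldType) n : Jmx F n \in unitmx.
Proof.
rewrite unitmxE -det_tr det_trig.
  by rewrite big1 ?unitr1 // => i _; rewrite !mxE eqxx.
apply/forallP => i; apply/forallP => j; apply/implyP => lt.
by rewrite !mxE (gtn_eqF lt) (ltn_eqF (leqW lt)).
Qed.


End M8.
Import M8.

Theorem theorem5 (p r s k : nat) (F : fieldType) (lam : seq nat) :
  prime p -> p \in [pchar F] -> (0 < r)%N -> (r <= s)%N ->
  jordan_type (Jmx F r *t Jmx F s) lam ->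
  jordan_type (Jmx F (p ^ k * r) *t Jmx F (p ^ k * s)) (mult_partition (p ^ k) lam).
Proof.
move=> pp pF r0 rs [Hsum Hsort Hpos [P [uP HP]]].
have [q' Eq] : exists q', (p ^ k)%N = q'.+1.
  by exists (p ^ k)%N.-1; rewrite prednK // expn_gt0 prime_gt0.
have hq : forall c, (0 < c < q'.+1)%N -> ('C(q'.+1, c))%:R = 0 :> F.
  by rewrite -Eq => c hc; apply: binq.
have H1 := step1 hq.
have hJ : sim (Jmx F r *t Jmx F s) (jordan_mx F (sumn lam) lam).
  rewrite Hsum; exists (invmx P), P; split; [exact: mulVmx | exact: mulmxV |].
  by rewrite -HP !mulmxA mulVmx // mul1mx.
rewrite Eq.
have Hsim : is_jt (Jmx F (q'.+1 * r)%N *t Jmx F (q'.+1 * s)%N) (mult_partition q'.+1 lam).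
  apply: is_jt_sim (K_induction H1 lam).
  rewrite [(q'.+1 * r)%N]mulnC [(q'.+1 * s)%N]mulnC.
  eapply sim_trans; first exact: (sim_tens (sim_sym (H1 r)) (sim_sym (H1 s))).
  eapply sim_trans; first exact: shuffle.
  eapply sim_trans; first exact: (sim_sym (TM q' (Jmx F s) (@Jmx_unit F r))).
  eapply sim_trans; first exact: (sim_sym (assocT _ _ _)).
  by apply: sim_tens; [apply: sim_K | apply: sim_refl].
have e : sumn (mult_partition q'.+1 lam) = (q'.+1 * r * (q'.+1 * s))%N.
  by rewrite sumn_mult Hsum; lia.
rewrite /is_jt e in Hsim.
split => //.
- exact: sorted_mult.
- exact: pos_mult.
- exact: sim_unit.
Qed.
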